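(* Let $p\ge 2$ and $\epsilon>0$. There exists an in-tree task graph $T$ in the Pebble Game model such that every schedule $S$ of $T$ on $p$ processors with makespan $C_{\max}(S)=C^*_p(T)$ has peak memory $M(S)> (p-1-\epsilon)\,M^*_p(T)$. Consequently, no algorithm that is optimal for makespan minimization is a $(p-1-\epsilon)$-approximation for peak memory minimization.
   Context: Model. An in-tree task graph $T$ has nodes $\{1,\dots,n\}$ and a root; every non-root node $i$ has a parent, and $\mathrm{Children}(i)$ is the set of children of $i$. Each node $i$ has a processing time $w_i\ge 0$, an execution-file size $n_i\ge 0$ and an output-file size $f_i\ge 0$. A schedule on $p$ identical processors assigns each node $i$ a processor and a start time $\sigma_i\ge 0$; node $i$ runs without preemption during $[\sigma_i,\sigma_i+w_i)$, a processor runs at most one node at a time, and a node may start only after all its children have completed. The makespan is $C_{\max}=\max_i(\sigma_i+w_i)$. Memory: the output file of $i$ (size $f_i$) occupies memory from the start of $i$ until the completion of the parent of $i$ (for the root, until the end of the schedule), and the execution file of $i$ occupies memory while $i$ runs. The memory used at time $t$ is the total size of files present at time $t$; the peak memory $M(S)$ is the supremum over $t$ of the memory used. $C^*_p(T)$ denotes the minimum makespan and $M^*_p(T)$ the minimum peak memory over all schedules of $T$ on $p$ processors. The Pebble Game model is the special case $f_i=1$, $w_i=1$, $n_i=0$ for all $i$. *)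

(* Defs.v *)
From Stdlib Require Import Reals List.
Import ListNotations.
Open Scope R_scope.

(* An in-tree task graph with nodes 0..nn-1 (the paper's 1..n, shifted). *)
Record InTree := {
  nn : nat;
  root : nat;
  parent : nat -> nat;   (* parent of non-root nodes; value at root irrelevant *)
  w : nat -> R;
  nexec : nat -> R;      (* execution-file size n_i *)
  fout : nat -> R        (* output-file size f_i *)
}.

Definition wf_tree (T : InTree) : Prop :=
  (root T < nn T)%nat /\
  (forall i, (i < nn T)%nat -> i <> root T -> (parent T i < nn T)%nat) /\
  (forall i, (i < nn T)%nat -> exists k, Nat.iter k (parent T) i = root T) /\
  (forall i, (i < nn T)%nat -> 0 <= w T i /\ 0 <= nexec T i /\ 0 <= fout T i).

Definition is_child (T : InTree) (j i : nat) : Prop :=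
  (j < nn T)%nat /\ j <> root T /\ parent T j = i.

Definition pebble (T : InTree) : Prop :=
  forall i, (i < nn T)%nat -> fout T i = 1 /\ w T i = 1 /\ nexec T i = 0.

Record Schedule := { proc : nat -> nat; sigma : nat -> R }.

Definition valid_schedule (T : InTree) (p : nat) (S : Schedule) : Prop :=
  (forall i, (i < nn T)%nat -> (proc S i < p)%nat /\ 0 <= sigma S i) /\
  (forall i j, (i < nn T)%nat -> (j < nn T)%nat -> i <> j -> proc S i = proc S j ->
     sigma S i + w T i <= sigma S j \/ sigma S j + w T j <= sigma S i) /\
  (forall i j, (i < nn T)%nat -> is_child T j i -> sigma S j + w T j <= sigma S i).

Definition Cmax (T : InTree) (S : Schedule) : R :=
  fold_right (fun i acc => Rmax (sigma S i + w T i) acc) 0 (seq 0 (nn T)).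

Definition in_interval (a t b : R) : bool :=
  if Rle_dec a t then (if Rlt_dec t b then true else false) else false.

Definition out_end (T : InTree) (S : Schedule) (i : nat) : R :=
  if Nat.eq_dec i (root T) then Cmax T S
  else sigma S (parent T i) + w T (parent T i).

Definition mem_at (T : InTree) (S : Schedule) (t : R) : R :=
  fold_right Rplus 0
    (map (fun i =>
        (if in_interval (sigma S i) t (out_end T S i) then fout T i else 0) +
        (if in_interval (sigma S i) t (sigma S i + w T i) then nexec T i else 0))
       (seq 0 (nn T))).

Definition is_peak_memory (T : InTree) (S : Schedule) (m : R) : Prop :=
  is_lub (fun x => exists t, x = mem_at T S t) m.

Definition is_glb (E : R -> Prop) (m : R) : Prop :=
  (forall x, E x -> m <= x) /\ (forall b, (forall x, E x -> b <= x) -> b <= m).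

Definition is_opt_makespan (T : InTree) (p : nat) (c : R) : Prop :=
  is_glb (fun x => exists S, valid_schedule T p S /\ x = Cmax T S) c.

Definition is_opt_memory (T : InTree) (p : nat) (m : R) : Prop :=
  is_glb (fun x => exists S, valid_schedule T p S /\ is_peak_memory T S x) m.

(* Main.v *)
From Stdlib Require Import Reals Arith Lia Lra List.
Require Import Defs.
Import ListNotations.
Open Scope R_scope.

Definition NN (q k : nat) : nat := (k + 2 + q + q * k)%nat.
Definition LL (q k : nat) : nat := (k + 2 + q)%nat.
Definition par (q k n : nat) : nat :=
  if Nat.leb n (k+1) then (n-1)%nat
  else if Nat.leb n (k+1+q) then 0%nat
  else (k + 2 + (n - LL q k) / k)%nat.
Definition g1 (q k n : nat) : nat :=
  if Nat.eqb n 0 then (k+1)%nat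
  else if Nat.leb n (k+1) then (k+1-n)%nat
  else if Nat.leb n (k+1+q) then k
  else ((n - LL q k) mod k)%nat.
Definition p1 (q k n : nat) : nat :=
  if Nat.leb n (k+1) then 0%nat
  else if Nat.leb n (k+1+q) then (n - (k+1))%nat
  else ((n - LL q k) / k + 1)%nat.
Definition g0 (q k n : nat) : nat :=
  if Nat.eqb n 0 then (q*(k+1)+k+1)%nat
  else if Nat.leb n (k+1) then (q*(k+1)+k+1-n)%nat
  else if Nat.leb n (k+1+q) then ((n-(k+2))*(k+1)+k)%nat
  else (((n - LL q k) / k)*(k+1) + (n - LL q k) mod k)%nat.

Definition Tr (q k : nat) : InTree :=
  {| nn := NN q k; root := 0; parent := par q k; w := fun _ => 1;
     nexec := fun _ => 0; fout := fun _ => 1 |}.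

Lemma classify q k n : (0 < k)%nat -> (n < NN q k)%nat ->
  n = 0%nat \/ (1 <= n <= k+1)%nat \/ (exists j, j < q /\ n = k+2+j)%nat \/
  (exists j r, j < q /\ r < k /\ n = k+2+q + j*k + r)%nat.
Proof.
  intros Hk Hn. unfold NN in Hn.
  destruct (Nat.eq_dec n 0) as [->|H0]; [left; reflexivity|right].
  destruct (le_lt_dec n (k+1)) as [H1|H1]; [left; lia|right].
  destruct (le_lt_dec n (k+1+q)) as [H2|H2]; [left; exists (n-(k+2))%nat; lia|right].
  exists ((n - LL q k)/k)%nat, ((n - LL q k) mod k)%nat.
  pose proof (Nat.div_mod_eq (n - LL q k) k) as E.
  pose proof (Nat.mod_upper_bound (n - LL q k) k ltac:(lia)).
  assert ((n - LL q k)/k < q)%nat.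
  { apply Nat.Div0.div_lt_upper_bound. unfold LL. lia. }
  unfold LL in *. repeat split; try lia.
Qed.

Lemma div_mod_jr k j r : (r < k)%nat -> ((j*k + r)/k = j /\ (j*k+r) mod k = r)%nat.
Proof.
  intros Hr. split.
  - rewrite Nat.div_add_l by lia. rewrite Nat.div_small by lia. lia.
  - rewrite (Nat.add_comm (j*k)). rewrite Nat.Div0.mod_add. apply Nat.mod_small; lia.
Qed.

Lemma at_chain q k i : (1 <= i <= k+1)%nat ->
  par q k i = (i-1)%nat /\ g1 q k i = (k+1-i)%nat /\ p1 q k i = 0%nat /\
  g0 q k i = (q*(k+1)+k+1-i)%nat.
Proof.
  intros H. unfold par, g1, p1, g0.
  destruct (Nat.eqb_spec i 0); [lia|].
  destruct (Nat.leb_spec i (k+1)); [|lia]. auto.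
Qed.

Lemma at_b q k j : (j < q)%nat ->
  par q k (k+2+j) = 0%nat /\ g1 q k (k+2+j) = k /\ p1 q k (k+2+j) = (j+1)%nat /\
  g0 q k (k+2+j) = (j*(k+1)+k)%nat.
Proof.
  intros H. unfold par, g1, p1, g0.
  destruct (Nat.eqb_spec (k+2+j) 0); [lia|].
  destruct (Nat.leb_spec (k+2+j) (k+1)); [lia|].
  destruct (Nat.leb_spec (k+2+j) (k+1+q)); [|lia].
  replace (k+2+j-(k+2))%nat with j by lia. repeat split; lia.
Qed.

Lemma at_leaf q k j r : (j < q)%nat -> (r < k)%nat ->
  par q k (k+2+q+j*k+r) = (k+2+j)%nat /\ g1 q k (k+2+q+j*k+r) = r /\
  p1 q k (k+2+q+j*k+r) = (j+1)%nat /\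
  g0 q k (k+2+q+j*k+r) = (j*(k+1)+r)%nat.
Proof.
  intros H Hr. unfold par, g1, p1, g0.
  destruct (Nat.eqb_spec (k+2+q+j*k+r) 0); [lia|].
  destruct (Nat.leb_spec (k+2+q+j*k+r) (k+1)); [lia|].
  destruct (Nat.leb_spec (k+2+q+j*k+r) (k+1+q)); [nia|].
  replace (k+2+q+j*k+r - LL q k)%nat with (j*k+r)%nat by (unfold LL; lia).
  destruct (div_mod_jr k j r Hr) as [-> ->]. auto.
Qed.

Lemma iter_chain q k i : (i <= k+1)%nat -> Nat.iter i (par q k) i = 0%nat.
Proof.
  induction i; intros H; [reflexivity|].
  rewrite Nat.iter_succ_r. destruct (at_chain q k (S i) ltac:(lia)) as [-> _].
  replace (S i - 1)%nat with i by lia. apply IHi; lia.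
Qed.

Lemma wf_Tr q k : (0 < k)%nat -> wf_tree (Tr q k).
Proof.
  intros Hk. unfold wf_tree; simpl. split; [unfold NN; lia|]. split; [|split].
  - intros i Hi Hr. destruct (classify q k i Hk Hi) as [->|[Hc|[[j [Hj ->]]|[j [r [Hj [Hr' ->]]]]]]].
    + lia.
    + destruct (at_chain q k i Hc) as [-> _]. unfold NN; lia.
    + destruct (at_b q k j Hj) as [-> _]. unfold NN; lia.
    + destruct (at_leaf q k j r Hj Hr') as [-> _]. unfold NN; lia.
  - intros i Hi. destruct (classify q k i Hk Hi) as [->|[Hc|[[j [Hj ->]]|[j [r [Hj [Hr' ->]]]]]]].
    + exists 0%nat; reflexivity.
    + exists i. apply iter_chain; lia.
    + exists 1%nat. simpl. destruct (at_b q k j Hj) as [-> _]. reflexivity.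
    + exists 2%nat. simpl. destruct (at_leaf q k j r Hj Hr') as [-> _].
      destruct (at_b q k j Hj) as [-> _]. reflexivity.
  - intros; lra.
Qed.
Lemma in_interval_spec a t b : in_interval a t b = true <-> a <= t < b.
Proof.
  unfold in_interval. destruct (Rle_dec a t); destruct (Rlt_dec t b); split; intros H;
  try discriminate; try lra; auto.
Qed.

Lemma in_interval_false a t b : in_interval a t b = false <-> ~ (a <= t < b).
Proof.
  rewrite <- in_interval_spec. destruct (in_interval a t b); split; intros; congruence.
Qed.

Lemma fold_count (f : nat -> bool) (l : list nat) :
  fold_right Rplus 0 (map (fun i => (if f i then 1 else 0) + 0) l) = INR (length (filter f l)).
Proof.
  induction l as [|x l IH]; cbn [map fold_right filter]; [reflexivity|].
  rewrite IH. destruct (f x); cbn [length]; [rewrite S_INR|]; lra.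
Qed.

Lemma flen_le {A} (f : A -> bool) l : (length (filter f l) <= length l)%nat.
Proof. induction l; simpl; [lia|destruct (f a); simpl; lia]. Qed.

Lemma flen_lt {A} (f : A -> bool) l x : In x l -> f x = false ->
  (length (filter f l) < length l)%nat.
Proof.
  induction l as [|a l IH]; simpl; [tauto|]. intros [->|H] Hf.
  - rewrite Hf. pose proof (flen_le f l). lia.
  - specialize (IH H Hf). destruct (f a); simpl; lia.
Qed.

Lemma filter_all {A} (f : A -> bool) l : (forall x, In x l -> f x = true) -> filter f l = l.
Proof.
  induction l as [|a l IH]; simpl; intros H; [reflexivity|].
  rewrite (H a (or_introl eq_refl)). f_equal. apply IH; auto.
Qed.

Lemma lsum_plus (f g : nat -> nat) ms :
  list_sum (map (fun m => f m + g m)%nat ms) = (list_sum (map f ms) + list_sum (map g ms))%nat.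
Proof. induction ms; simpl; lia. Qed.

Lemma lsum_ind (P : nat -> bool) ms : (exists m, In m ms /\ P m = true) ->
  (1 <= list_sum (map (fun m => if P m then 1 else 0)%nat ms))%nat.
Proof.
  induction ms as [|a ms IH]; simpl; intros [m [Hm Hp]]; [tauto|].
  destruct Hm as [->|Hm]; [rewrite Hp; lia|].
  assert (1 <= list_sum (map (fun m => if P m then 1 else 0)%nat ms))%nat by (apply IH; eauto).
  lia.
Qed.

Lemma sum_ge (P : nat -> nat -> bool) (L ms : list nat) :
  (forall x, In x L -> exists m, In m ms /\ P m x = true) ->
  (length L <= list_sum (map (fun m => length (filter (P m) L)) ms))%nat.
Proof.
  induction L as [|x L IH]; simpl; intros H; [lia|].
  transitivity (list_sum (map (fun m => (if P m x then 1 else 0) + length (filter (P m) L))%nat ms)).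
  - rewrite lsum_plus. pose proof (lsum_ind (fun m => P m x) ms (H x (or_introl eq_refl))).
    pose proof (IH (fun y Hy => H y (or_intror Hy))). lia.
  - apply Nat.eq_le_incl. f_equal. apply map_ext. intros m. destruct (P m x); reflexivity.
Qed.

Lemma sum_le (f : nat -> nat) c ms : (forall m, In m ms -> (f m <= c)%nat) ->
  (list_sum (map f ms) <= c * length ms)%nat.
Proof.
  induction ms as [|a ms IH]; simpl; intros H; [lia|].
  pose proof (H a (or_introl eq_refl)). pose proof (IH (fun m Hm => H m (or_intror Hm))). lia.
Qed.

Lemma fold_max_ge (f : nat -> R) l x : In x l ->
  f x <= fold_right (fun i acc => Rmax (f i) acc) 0 l.
Proof.
  induction l as [|a l IH]; simpl; [tauto|]. intros [->|H].
  - apply Rmax_l.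
  - eapply Rle_trans; [apply IH; auto|apply Rmax_r].
Qed.

Lemma fold_max_le (f : nat -> R) l B : 0 <= B -> (forall x, In x l -> f x <= B) ->
  fold_right (fun i acc => Rmax (f i) acc) 0 l <= B.
Proof.
  induction l as [|a l IH]; simpl; intros H0 H; [auto|].
  apply Rmax_lub; [apply H; auto|apply IH; auto].
Qed.

Lemma floor_like (n : nat) x : 0 <= x <= INR n ->
  exists m, (m <= n)%nat /\ x <= INR m < x + 1.
Proof.
  induction n as [|n IH]; intros H.
  - exists 0%nat. simpl in *. split; [lia|lra].
  - rewrite S_INR in H. destruct (Rle_dec x (INR n)) as [Hx|Hx].
    + destruct (IH (conj (proj1 H) Hx)) as [m [Hm Hm']]. exists m; split; [lia|auto].
    + exists (S n). split; [lia|]. rewrite S_INR. lra.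
Qed.

Ltac cls q k Hk x Hx :=
  let Hc := fresh "Hc" in let jj := fresh "j" in let rr := fresh "r" in
  let Hj := fresh "Hj" in let Hr := fresh "Hr" in
  let E1 := fresh "E" in let E2 := fresh "E" in let E3 := fresh "E" in let E4 := fresh "E" in
  destruct (classify q k x Hk Hx) as [->|[Hc|[[jj [Hj ->]]|[jj [rr [Hj [Hr ->]]]]]]];
  [ | destruct (at_chain q k x Hc) as [E1 [E2 [E3 E4]]]
    | destruct (at_b q k jj Hj) as [E1 [E2 [E3 E4]]]
    | destruct (at_leaf q k jj rr Hj Hr) as [E1 [E2 [E3 E4]]] ];
  try rewrite ?E1, ?E2, ?E3, ?E4 in *.

Lemma g1_0 q k : g1 q k 0 = (k+1)%nat. Proof. reflexivity. Qed.
Lemma g0_0 q k : g0 q k 0 = (q*(k+1)+k+1)%nat. Proof. reflexivity. Qed.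
Lemma p1_0 q k : p1 q k 0 = 0%nat. Proof. reflexivity. Qed.

Lemma nat_sep a b : a <> b -> INR a + 1 <= INR b \/ INR b + 1 <= INR a.
Proof.
  intros H. destruct (Nat.lt_gt_cases a b) as [[H'|H']]; [lia| |].
  - left. rewrite <- S_INR. apply le_INR. lia.
  - right. rewrite <- S_INR. apply le_INR. lia.
Qed.

Lemma nat_prec a b : (a + 1 <= b)%nat -> INR a + 1 <= INR b.
Proof. intros H. rewrite <- S_INR. apply le_INR. lia. Qed.

Definition S1 q k : Schedule := {| proc := p1 q k; sigma := fun n => INR (g1 q k n) |}.
Definition S0 q k : Schedule := {| proc := fun _ => 0%nat; sigma := fun n => INR (g0 q k n) |}.

Lemma mem_count q k S t :
  mem_at (Tr q k) S t = INR (length (filter (fun i => in_interval (sigma S i) t (out_end (Tr q k) S i)) (seq 0 (NN q k)))).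
Proof.
  unfold mem_at. rewrite <- fold_count. f_equal. apply map_ext. intros i. simpl.
  destruct (in_interval _ t _); destruct (in_interval _ t _); reflexivity.
Qed.

Lemma valid_S1 q k : (0 < k)%nat -> valid_schedule (Tr q k) (S (q)) (S1 q k).
Proof.
  intros Hk. unfold valid_schedule; simpl. split; [|split].
  - intros i Hi. split; [|apply pos_INR]. cls q k Hk i Hi; rewrite ?p1_0; lia.
  - intros i j Hi Hj Hne Hp. apply nat_sep.
    cls q k Hk i Hi; cls q k Hk j Hj; rewrite ?p1_0, ?g1_0 in *; try lia.
  - intros i j Hi [Hj [Hj0 Hpar]]. subst i. apply nat_prec.
    change (parent (Tr q k)) with (par q k) in *. change (root (Tr q k)) with 0%nat in *.
    cls q k Hk j Hj; try lia.
    + destruct (Nat.eq_dec j 1) as [->|Hj1].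
      * simpl. rewrite g1_0. lia.
      * destruct (at_chain q k (j-1) ltac:(lia)) as [_ [-> _]]. lia.
    + rewrite g1_0. lia.
    + destruct (at_b q k j0 Hj1) as [_ [-> _]]. lia.
Qed.

Lemma mix_ne k a b r : (r < k)%nat -> (a*(k+1)+k <> b*(k+1)+r)%nat.
Proof.
  intros Hr. destruct (lt_eq_lt_dec a b) as [[H|H]|H].
  - assert (a*(k+1)+ (k+1) <= b*(k+1))%nat by nia. lia.
  - subst; lia.
  - assert (b*(k+1)+ (k+1) <= a*(k+1))%nat by nia. lia.
Qed.

Lemma valid_S0 q k p : (0 < k)%nat -> (0 < p)%nat -> valid_schedule (Tr q k) p (S0 q k).
Proof.
  intros Hk Hp0. unfold valid_schedule; simpl. split; [|split].
  - intros i Hi. split; [lia|apply pos_INR].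
  - intros i j Hi Hj Hne _. apply nat_sep.
    cls q k Hk i Hi; cls q k Hk j Hj; rewrite ?g0_0 in *; try nia.
    all: intro HE; first [ refine (mix_ne k _ _ _ _ HE); lia | refine (mix_ne k _ _ _ _ (eq_sym HE)); lia ].
  - intros i j Hi [Hj [Hj0 Hpar]]. subst i. apply nat_prec.
    change (parent (Tr q k)) with (par q k) in *. change (root (Tr q k)) with 0%nat in *.
    cls q k Hk j Hj; try lia.
    + destruct (Nat.eq_dec j 1) as [->|Hj1].
      * simpl. rewrite g0_0. lia.
      * destruct (at_chain q k (j-1) ltac:(lia)) as [_ [_ [_ ->]]]. lia.
    + rewrite g0_0. nia.
    + destruct (at_b q k j0 Hj1) as [_ [_ [_ ->]]]. lia.
Qed.

Lemma Cmax_S1 q k : (0 < k)%nat -> Cmax (Tr q k) (S1 q k) <= INR k + 2.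
Proof.
  intros Hk. unfold Cmax. apply fold_max_le.
  - pose proof (pos_INR k); lra.
  - intros i Hi. apply in_seq in Hi. simpl in Hi. simpl.
    replace (INR k + 2) with (INR (k+1) + 1) by (rewrite plus_INR; simpl; lra).
    apply Rplus_le_compat_r. apply le_INR.
    assert (Hi' : (i < NN q k)%nat) by lia.
    cls q k Hk i Hi'; rewrite ?g1_0; lia.
Qed.

Lemma rn_lt a b t : INR a <= t -> t < INR b -> (a < b)%nat.
Proof. intros H1 H2. apply INR_lt. lra. Qed.

Definition live0 q k t i := in_interval (INR (g0 q k i)) t (out_end (Tr q k) (S0 q k) i).

Lemma out_end_nr T S i : i <> root T -> out_end T S i = sigma S (parent T i) + w T (parent T i).
Proof. intros H. unfold out_end. destruct (Nat.eq_dec i (root T)); [contradiction|reflexivity]. Qed.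

Lemma chain_live q k t i : (1 <= i <= k+1)%nat -> live0 q k t i = true ->
  (INR (q*(k+1)+k+1-i) <= t /\ t < INR (q*(k+1)+k+1-i+2))%R.
Proof.
  intros Hc Hl. unfold live0 in Hl. apply in_interval_spec in Hl.
  rewrite out_end_nr in Hl by (simpl; lia). simpl in Hl.
  destruct (at_chain q k i Hc) as [E1 [_ [_ E4]]]. rewrite E1, E4 in Hl.
  assert (E : g0 q k (i-1) = (q*(k+1)+k+1-i+1)%nat).
  { destruct (Nat.eq_dec i 1) as [->|H1]; [rewrite g0_0; lia|].
    destruct (at_chain q k (i-1) ltac:(lia)) as [_ [_ [_ ->]]]. lia. }
  rewrite E in Hl. rewrite (plus_INR _ 2). rewrite plus_INR in Hl. simpl in *. lra.
Qed.

Lemma leaf_live q k t j r : (j < q)%nat -> (r < k)%nat -> live0 q k t (k+2+q+j*k+r) = true ->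
  (INR (j*(k+1)) <= t /\ t < INR ((j+1)*(k+1)))%R.
Proof.
  intros Hj Hr Hl. unfold live0 in Hl. apply in_interval_spec in Hl.
  rewrite out_end_nr in Hl by (simpl; lia). simpl in Hl.
  destruct (at_leaf q k j r Hj Hr) as [E1 [_ [_ E4]]]. rewrite E1, E4 in Hl.
  destruct (at_b q k j Hj) as [_ [_ [_ E5]]]. rewrite E5 in Hl.
  split.
  - eapply Rle_trans; [|apply Hl]. apply le_INR. lia.
  - replace ((j+1)*(k+1))%nat with (j*(k+1)+k+1)%nat by lia.
    rewrite plus_INR with (m := 1%nat) in *. simpl in *. lra.
Qed.

Lemma mem_S0 q k t : (0 < k)%nat -> mem_at (Tr q k) (S0 q k) t <= INR (k + q + 4).
Proof.
  intros Hk. rewrite mem_count. apply le_INR.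
  change (fun i => in_interval (sigma (S0 q k) i) t (out_end (Tr q k) (S0 q k) i)) with (live0 q k t).
  replace (NN q k) with (1 + ((k+1) + (q + q*k)))%nat by (unfold NN; lia).
  rewrite (seq_app 1 ((k+1) + (q+q*k)) 0), (seq_app (k+1) (q+q*k) (0+1)), (seq_app q (q*k) (0+1+(k+1))).
  rewrite !filter_app, !length_app. simpl (0 + 1)%nat.
  pose proof (flen_le (live0 q k t) (seq 0 1)) as B1. rewrite length_seq in B1.
  pose proof (flen_le (live0 q k t) (seq (1 + (k+1)) q)) as B3. rewrite length_seq in B3.
  assert (B2 : (length (filter (live0 q k t) (seq 1 (k+1))) <= 3)%nat).
  { destruct (filter (live0 q k t) (seq 1 (k+1))) as [|i0 l] eqn:EF; [simpl; lia|].
    assert (Hi0 : In i0 (filter (live0 q k t) (seq 1 (k+1)))) by (rewrite EF; left; auto).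
    rewrite <- EF.
    apply filter_In in Hi0. destruct Hi0 as [Hs0 Hl0]. apply in_seq in Hs0.
    apply chain_live in Hl0; [|lia].
    change 3%nat with (length [i0-1; i0; i0+1]%nat).
    apply NoDup_incl_length; [apply NoDup_filter, seq_NoDup|].
    intros i Hi. apply filter_In in Hi. destruct Hi as [Hs Hl]. apply in_seq in Hs.
    apply chain_live in Hl; [|lia].
    assert (A1 := rn_lt _ _ t (proj1 Hl) (proj2 Hl0)).
    assert (A2 := rn_lt _ _ t (proj1 Hl0) (proj2 Hl)).
    simpl. lia. }
  assert (B4 : (length (filter (live0 q k t) (seq (1 + (k+1) + q) (q*k))) <= k)%nat).
  { destruct (filter (live0 q k t) (seq (1 + (k+1) + q) (q*k))) as [|i0 l] eqn:EF; [simpl; lia|].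
    assert (Hi0 : In i0 (filter (live0 q k t) (seq (1 + (k+1) + q) (q*k)))) by (rewrite EF; left; auto).
    rewrite <- EF.
    apply filter_In in Hi0. destruct Hi0 as [Hs0 Hl0]. apply in_seq in Hs0.
    assert (Hn0 : (i0 < NN q k)%nat) by (unfold NN; lia).
    destruct (classify q k i0 Hk Hn0) as [->|[Hc|[[jj [Hj ->]]|[j0 [r0 [Hj0 [Hr0 ->]]]]]]]; try lia.
    apply leaf_live in Hl0; auto.
    apply Nat.le_trans with (length (seq (k+2+q+j0*k) k)); [|rewrite length_seq; lia].
    apply NoDup_incl_length; [apply NoDup_filter, seq_NoDup|].
    intros i Hi. apply filter_In in Hi. destruct Hi as [Hs Hl]. apply in_seq in Hs.
    assert (Hn : (i < NN q k)%nat) by (unfold NN; lia).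
    destruct (classify q k i Hk Hn) as [->|[Hc|[[jj [Hj ->]]|[j [r [Hj [Hr ->]]]]]]]; try lia.
    apply leaf_live in Hl; auto.
    assert (A1 := rn_lt _ _ t (proj1 Hl) (proj2 Hl0)).
    assert (A2 := rn_lt _ _ t (proj1 Hl0) (proj2 Hl)).
    assert (j = j0).
    { destruct (lt_eq_lt_dec j j0) as [[H|H]|H]; auto; exfalso; nia. }
    subst j. apply in_seq. lia. }
  lia.
Qed.

Definition runm (Sc : Schedule) (m i : nat) : bool :=
  in_interval (sigma Sc i) (INR m) (sigma Sc i + 1).

Lemma lower q k Sc : (0 < k)%nat -> (0 < q)%nat -> valid_schedule (Tr q k) (S q) Sc ->
  Cmax (Tr q k) Sc <= INR k + 2 -> INR (q*k) <= mem_at (Tr q k) Sc (INR k).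
Proof.
  intros Hk Hq [V1 [V2 V3]] HC. simpl in V1, V2, V3.
  set (s := sigma Sc) in *.
  assert (Prec : forall j, (j < NN q k)%nat -> j <> 0%nat -> s j + 1 <= s (par q k j)).
  { intros j Hj Hj0. apply V3; [|repeat split; auto].
    destruct (wf_Tr q k Hk) as [_ [Hp _]]. apply Hp; auto. }
  assert (H0 : s 0%nat <= INR k + 1).
  { assert (s 0%nat + 1 <= Cmax (Tr q k) Sc).
    { unfold Cmax. apply (fold_max_ge (fun i => sigma Sc i + w (Tr q k) i)). apply in_seq.
      simpl. unfold NN. lia. }
    lra. }
  assert (Ch : forall n, (n <= k)%nat -> s (S n) + INR n <= s 1%nat).
  { induction n; intros Hn; [simpl; lra|].
    specialize (IHn ltac:(lia)).
    assert (P := Prec (S (S n)) ltac:(unfold NN; lia) ltac:(lia)).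
    destruct (at_chain q k (S (S n)) ltac:(lia)) as [E _]. rewrite E in P.
    replace (S (S n) - 1)%nat with (S n) in P by lia. rewrite S_INR. lra. }
  assert (C1lo : INR k <= s 1%nat).
  { specialize (Ch k ltac:(lia)). assert (0 <= s (S k)) by (apply V1; unfold NN; lia). lra. }
  assert (C1hi : s 1%nat <= INR k).
  { assert (P := Prec 1%nat ltac:(unfold NN; lia) ltac:(lia)).
    destruct (at_chain q k 1 ltac:(lia)) as [E _]. rewrite E in P. simpl in P. lra. }
  assert (Bhi : forall j, (j < q)%nat -> s (k+2+j)%nat <= INR k).
  { intros j Hj. assert (P := Prec (k+2+j)%nat ltac:(unfold NN; lia) ltac:(lia)).
    destruct (at_b q k j Hj) as [E _]. rewrite E in P. lra. }
  assert (Lhi : forall j r, (j < q)%nat -> (r < k)%nat -> s (k+2+q+j*k+r)%nat + 1 <= s (k+2+j)%nat).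
  { intros j r Hj Hr. assert (P := Prec (k+2+q+j*k+r)%nat ltac:(unfold NN; nia) ltac:(lia)).
    destruct (at_leaf q k j r Hj Hr) as [E _]. rewrite E in P. lra. }
  assert (Rng : forall i, (1 <= i < NN q k)%nat -> 0 <= s i <= INR k).
  { intros i Hi. split; [apply V1; lia|].
    destruct (classify q k i Hk ltac:(lia)) as [->|[Hc|[[j [Hj ->]]|[j [r [Hj [Hr ->]]]]]]].
    - lia.
    - specialize (Ch (i-1)%nat ltac:(lia)). replace (S (i-1)) with i in Ch by lia.
      pose proof (pos_INR (i-1)). lra.
    - auto.
    - specialize (Lhi j r Hj Hr). specialize (Bhi j Hj). lra. }
  set (L := seq 1 (NN q k - 1)).
  assert (HA : forall m, (length (filter (runm Sc m) L) <= S q)%nat).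
  { intros m. rewrite <- (length_map (proc Sc)).
    apply Nat.le_trans with (length (seq 0 (S q))); [|rewrite length_seq; lia].
    apply NoDup_incl_length.
    - apply NoDup_map_NoDup_ForallPairs; [|apply NoDup_filter, seq_NoDup].
      intros x y Hx Hy Hp. apply filter_In in Hx, Hy.
      destruct Hx as [Hx Rx], Hy as [Hy Ry]. apply in_seq in Hx, Hy.
      unfold runm in Rx, Ry. apply in_interval_spec in Rx, Ry. change (sigma Sc) with s in Rx, Ry.
      destruct (Nat.eq_dec x y) as [|Hne]; auto. exfalso.
      destruct (V2 x y ltac:(lia) ltac:(lia) Hne Hp); lra.
    - intros z Hz. apply in_map_iff in Hz. destruct Hz as [x [<- Hx]].
      apply filter_In in Hx. destruct Hx as [Hx _]. apply in_seq in Hx.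
      apply in_seq. split; [lia|]. simpl. apply V1. lia. }
  assert (HB : (length L <= list_sum (map (fun m => length (filter (runm Sc m) L)) (seq 0 (k+1))))%nat).
  { apply sum_ge. intros x Hx. unfold L in Hx. apply in_seq in Hx.
    destruct (floor_like k (s x) (Rng x ltac:(lia))) as [m [Hm Hm']].
    exists m. split; [apply in_seq; lia|]. unfold runm. apply in_interval_spec. change (sigma Sc) with s. lra. }
  assert (Ball : forall j, (j < q)%nat -> runm Sc k (k+2+j) = true).
  { intros j0 Hj0. destruct (runm Sc k (k+2+j0)) eqn:Er; auto. exfalso.
    assert (HC' : (length (filter (runm Sc k) L) <= q)%nat).
    { apply Nat.le_trans with (length (filter (runm Sc k) (1%nat :: seq (k+2) q))).
      - apply NoDup_incl_length; [apply NoDup_filter, seq_NoDup|].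
        intros i Hi. apply filter_In in Hi. destruct Hi as [Hi Ri]. apply in_seq in Hi.
        apply filter_In. split; auto.
        unfold runm in Ri. apply in_interval_spec in Ri. change (sigma Sc) with s in Ri.
        destruct (classify q k i Hk ltac:(lia)) as [->|[Hc|[[j [Hj ->]]|[j [r [Hj [Hr ->]]]]]]].
        + lia.
        + destruct (Nat.eq_dec i 1) as [->|Hi1]; [left; auto|exfalso].
          specialize (Ch (i-1)%nat ltac:(lia)). replace (S (i-1)) with i in Ch by lia.
          assert (1 <= INR (i-1)) by (apply (le_INR 1); lia). lra.
        + right. apply in_seq. lia.
        + exfalso. specialize (Lhi j r Hj Hr). specialize (Bhi j Hj). lra.
      - pose proof (flen_lt (runm Sc k) (1%nat :: seq (k+2) q) (k+2+j0)%nat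
          ltac:(right; apply in_seq; lia) Er) as X.
        cbn [length] in X. rewrite length_seq in X. lia. }
    replace (k+1)%nat with (k + 1)%nat in HB by reflexivity.
    rewrite seq_app, map_app, list_sum_app in HB. simpl (0 + k)%nat in HB.
    pose proof (sum_le (fun m => length (filter (runm Sc m) L)) (S q) (seq 0 k)
      (fun m _ => HA m)) as X. rewrite length_seq in X.
    assert (LL' : length L = (NN q k - 1)%nat) by (unfold L; apply length_seq).
    simpl in HB. rewrite LL' in HB. unfold NN in HB. nia. }
  rewrite mem_count. apply le_INR.
  replace (NN q k) with (LL q k + q*k)%nat by (unfold NN, LL; lia).
  rewrite seq_app, filter_app, length_app.
  rewrite (filter_all _ (seq (0 + LL q k) (q*k))).
  - rewrite length_seq. lia.
  - intros x Hx. apply in_seq in Hx. unfold LL in Hx.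
    destruct (classify q k x Hk ltac:(unfold NN; lia)) as [->|[Hc|[[j [Hj ->]]|[j [r [Hj [Hr ->]]]]]]]; try lia.
    apply in_interval_spec. rewrite out_end_nr by (simpl; lia). simpl.
    destruct (at_leaf q k j r Hj Hr) as [E _]. rewrite E.
    specialize (Ball j Hj). unfold runm in Ball. apply in_interval_spec in Ball. change (sigma Sc) with s in Ball.
    specialize (Lhi j r Hj Hr). change (sigma Sc) with s. lra.
Qed.

Theorem theorem4 (p : nat) (eps : R) :
  (2 <= p)%nat -> 0 < eps ->
  exists T : InTree, wf_tree T /\ pebble T /\
    forall (S : Schedule) (Cstar Mstar MS : R),
      valid_schedule T p S ->
      is_opt_makespan T p Cstar -> Cmax T S = Cstar ->
      is_opt_memory T p Mstar ->
      is_peak_memory T S MS ->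
      MS > (INR p - 1 - eps) * Mstar.
Proof.
  intros Hp Heps. destruct p as [|q]; [lia|].
  assert (Hq : (0 < q)%nat) by lia.
  destruct (INR_unbounded (INR q * (INR q + 4) / eps)) as [n Hn].
  set (k := S n).
  assert (Hk : (0 < k)%nat) by (unfold k; lia).
  assert (Hkb : INR q * (INR q + 4) < eps * INR k).
  { unfold k. rewrite S_INR. apply Rmult_gt_compat_l with (r := eps) in Hn; auto.
    replace (eps * (INR q * (INR q + 4) / eps)) with (INR q * (INR q + 4)) in Hn by (field; lra).
    lra. }
  exists (Tr q k). split; [apply wf_Tr; auto|]. split.
  { intros i _. simpl. lra. }
  intros Sc Cstar Mstar MS Hv Hopt HCe Hmem Hpeak.
  assert (HC : Cmax (Tr q k) Sc <= INR k + 2).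
  { rewrite HCe. eapply Rle_trans; [apply (proj1 Hopt)|apply (Cmax_S1 q k Hk)].
    exists (S1 q k). split; auto. apply valid_S1; auto. }
  assert (Hlow : INR (q*k) <= MS).
  { eapply Rle_trans; [apply (lower q k Sc Hk Hq Hv HC)|].
    apply (proj1 Hpeak). exists (INR k). reflexivity. }
  assert (Hup : Mstar <= INR (k+q+4)).
  { destruct (completeness (fun x => exists t, x = mem_at (Tr q k) (S0 q k) t)) as [m0 Hm0].
    - exists (INR (k+q+4)). intros x [t ->]. apply mem_S0; auto.
    - exists (mem_at (Tr q k) (S0 q k) 0). exists 0. reflexivity.
    - apply Rle_trans with m0.
      + apply (proj1 Hmem). exists (S0 q k). split; auto. apply valid_S0; lia.
      + apply (proj2 Hm0). intros x [t ->]. apply mem_S0; auto. }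
  assert (Hpos : 0 <= Mstar).
  { apply (proj2 Hmem). intros x [S' [_ HS']].
    apply Rle_trans with (mem_at (Tr q k) S' 0).
    - rewrite mem_count. apply pos_INR.
    - apply (proj1 HS'). exists 0. reflexivity. }
  rewrite S_INR. rewrite mult_INR in Hlow. rewrite !plus_INR in Hup. replace (INR 4) with 4 in Hup by (simpl; ring).
  assert (1 <= INR q) by (apply (le_INR 1); lia).
  assert (1 <= INR k) by (apply (le_INR 1); lia).
  replace (INR q + 1 - 1 - eps) with (INR q - eps) by ring.
  destruct (Rle_dec (INR q - eps) 0) as [Hs|Hs].
  - assert ((INR q - eps) * Mstar <= 0) by nra.
    nra.
  - assert ((INR q - eps) * Mstar <= (INR q - eps) * (INR k + INR q + 4)).
    { apply Rmult_le_compat_l; lra. }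
    nra.
Qed.
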